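(* Let $F$ be a near-idempotent tract, let $J\subseteq\Delta^r_n$ and $J'\subseteq\Delta^{r'}_{n'}$ be M-convex sets, and let $\iota\colon J\to J'$ be a polymatroid embedding. For an $F$-representation $\rho$ of $J'$, define $\iota^*\rho\colon\Delta^r_n\to F$ by $\iota^*\rho(\alpha)=\rho(\iota(\alpha))$ for $\alpha\in J$ and $\iota^*\rho(\alpha)=0$ otherwise. Then $\iota^*\rho$ is an $F$-representation of $J$, and $[\rho]\mapsto[\iota^*\rho]$ is a well-defined map $\iota^*\colon\mathrm{Gr}_{J'}(F)\to\mathrm{Gr}_J(F)$. If $\iota$ is bijective, then $\iota^*$ is bijective.
   Context: Tract: commutative monoid with absorbing $0$, $F^\times=F\setminus\{0\}$ a group, null set $N_F$ an ideal of $\mathbb N[F^\times]$ with unique additive inverses. $F$ is near-idempotent if $1+1\in N_F$ (so $-1=1$) and $1+1+x\in N_F$ for some $x\in F^\times$. M-convex $J\subseteq\Delta^r_n$: nonempty, and for $\alpha,\beta\in J$ and $i$ with $\alpha_i<\beta_i$ there is $j$ with $\alpha_j>\beta_j$ and $\alpha+\epsilon_i-\epsilon_j,\beta-\epsilon_i+\epsilon_j\in J$; $\delta^\mp_J$ = componentwise min/max. For near-idempotent $F$, an $F$-representation of $J$ is $\rho\colon\Delta^r_n\to F$ with support exactly $J$ such that $\sum_{k=0}^s\rho(\alpha-\epsilon_{i_k}+\epsilon_{i_0}+\dots+\epsilon_{i_s})\rho(\alpha+\epsilon_{i_k}+\epsilon_{j_2}+\dots+\epsilon_{j_s})\in N_F$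 for all $2\le s\le r$, $\alpha\in\Delta^{r-s}_n$ with $\delta^-_J\le\alpha$, and $i_0,\dots,i_s,j_2,\dots,j_s\in[n]$ with $\alpha+\epsilon_{i_0}+\dots+\epsilon_{i_s}+\epsilon_{j_2}+\dots+\epsilon_{j_s}\le\delta^+_J$. $\mathrm{Gr}_J(F)$ is the set of $F$-representations modulo $\rho\sim a\rho$ ($a\in F^\times$). Deletion and contraction: for $\nu\in\mathbb N^n$ with $\nu\le\delta^+_J-\alpha$ for some $\alpha\in J$, $J\setminus\nu=\{\alpha\in J:\alpha\le\delta^+_J-\nu\}$; for $\mu\in\mathbb N^n$ with $\mu\le\alpha-\delta^-_J$ for some $\alpha\in J$, $J/\mu=\{\alpha-\mu:\alpha\in J,\ \delta^-_J+\mu\le\alpha\}$. An embedded minor is $J\setminus\nu/\mu+\tau=((J\setminus\nu)/\mu)+\tau$ where $\mu+\delta^-_{J\setminus\nu}\le\alpha\le\delta^+_J-\nu$ for some $\alpha\in J$ and $\tau\in\mathbb Z^n$ with $\tau\ge-\delta^-_{(J\setminus\nu)/\mu}$; its minor embedding is $J\setminus\nu/\mu+\tau\to J$, $\alpha\mapsto\alpha+\mu-\tau$. For $\sigma\in S_n$, $\iota_\sigma\colon J\to\sigma(J)$ permutes coordinates; $\iota_n\colon J\to\iota_n(J)\subseteq\Delta^r_{n+1}$ appends a zero coordinate (extension of variables), and its inverse $\iota_n(J)\to J$ is a restriction of variables. These four kinds of maps are elementary polymatroid embeddings; a polymatroid embedding is a composition of elementary ones (all these sets are M-convex). *)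

(* Defs.v *)
From HB Require Import structures.
From Stdlib Require Import Permutation.
From mathcomp Require Import all_boot all_order all_algebra all_fingroup.
From mathcomp Require Import finmap.
Set Implicit Arguments. Unset Strict Implicit. Unset Printing Implicit Defensive.
Import Order.TTheory GRing.Theory Num.Theory.


(* Tracts.  A tract F = F^x ∪ {0}: the unit group F^x is the carrier tG     *)
(* (an abstract commutative group), F itself is [option tG] with None = 0   *)
(* (absorbing).  Elements of N[F^x] are finite multisets, i.e. lists up to  *)
(* permutation; the null set N_F is a permutation-invariant predicate on    *)
(* such lists forming an ideal of the semiring N[F^x] and having unique     *)
(* additive inverses.                                                       *)
Record tract := Tract {
  tG :> Type;
  tmul : tG -> tG -> tG;
  tone : tG;
  tinv : tG -> tG;
  tmulA : associative tmul;
  tmulC : commutative tmul;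
  tmul1 : left_id tone tmul;
  tmulV : forall x, tmul (tinv x) x = tone;
  tnull : seq tG -> Prop;
  tnull_perm : forall s t, Permutation s t -> tnull s -> tnull t;
  tnull0 : tnull [::];
  tnullD : forall s t, tnull s -> tnull t -> tnull (s ++ t);
  tnullM : forall s t, tnull s -> tnull [seq tmul x y | x <- t, y <- s];
  tnull_inv : forall x, exists! y, tnull [:: x; y];
}.

Definition tF (F : tract) := option (tG F).
Definition fzero (F : tract) : tF F := None.
Definition fmul (F : tract) (a b : tF F) : tF F :=
  match a, b with Some x, Some y => Some (tmul x y) | _, _ => None end.
(* "a_1 + ... + a_k ∈ N_F" for a_i ∈ F: zero summands are dropped *)
Definition fnull (F : tract) (s : seq (tF F)) : Prop := tnull (pmap id s).

Definition near_idempotent (F : tract) : Prop :=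
  tnull [:: tone F; tone F] /\ exists x : F, tnull [:: tone F; tone F; x].

Definition vec (n : nat) := {ffun 'I_n -> nat}.
Definition vsum n (a : vec n) : nat := \sum_(i < n) a i.
Definition vadd n (a b : vec n) : vec n := [ffun i => a i + b i].
(* truncated subtraction; only used where it is exact *)
Definition vsub n (a b : vec n) : vec n := [ffun i => a i - b i].
Definition vle n (a b : vec n) : bool := [forall i, a i <= b i].
Definition unitv n (i : 'I_n) : vec n := [ffun j => nat_of_bool (j == i)].
Definition sumunits n m (f : 'I_m -> 'I_n) : vec n :=
  [ffun t => \sum_(k < m) nat_of_bool (f k == t)].

Definition dmax n (J : {fset vec n}) : vec n := [ffun i => \max_(a <- J) a i].
Definition dmin n (J : {fset vec n}) : vec n :=
  [ffun i => \big[minn/dmax J i]_(a <- J) a i].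

Definition Mconvex n (r : nat) (J : {fset vec n}) : Prop :=
  J != fset0 /\
  (forall a, a \in J -> vsum a = r) /\
  (forall a b, a \in J -> b \in J -> forall i, a i < b i ->
     exists j, b j < a j /\
       vsub (vadd a (unitv i)) (unitv j) \in J /\
       vadd (vsub b (unitv i)) (unitv j) \in J).

Definition is_rep (F : tract) n (r : nat) (J : {fset vec n})
    (rho : vec n -> tF F) : Prop :=
  (forall a, rho a <> None <-> a \in J) /\
  (forall s, 2 <= s <= r ->
   forall a : vec n, vsum a = r - s -> vle (dmin J) a ->
   forall (i : 'I_s.+1 -> 'I_n) (j : 'I_s.-1 -> 'I_n),
   vle (vadd (vadd a (sumunits i)) (sumunits j)) (dmax J) ->
   fnull [seq fmul (rho (vsub (vadd a (sumunits i)) (unitv (i k))))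
                   (rho (vadd (vadd a (unitv (i k))) (sumunits j)))
         | k : 'I_s.+1]).

(* rho ~ c rho for c ∈ F^x; classes for ~ are the points of Gr_J(F) *)
Definition rep_equiv (F : tract) n (rho1 rho2 : vec n -> tF F) : Prop :=
  exists c : F, forall a, rho2 a = fmul (Some c) (rho1 a).

Definition delset n (J : {fset vec n}) (nu : vec n) : {fset vec n} :=
  [fset a in J | vle (vadd a nu) (dmax J)]%fset.
Definition conset n (J : {fset vec n}) (mu : vec n) : {fset vec n} :=
  [fset vsub a mu | a in [fset a in J | vle (vadd (dmin J) mu) a]%fset]%fset.
(* translation by tau ∈ Z^n (exact on the sets where it is used) *)
Definition shiftv n (a : vec n) (tau : {ffun 'I_n -> int}) : vec n :=
  [ffun i => `|((a i)%:Z + tau i)%R|%N].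
Definition minor n (J : {fset vec n}) (nu mu : vec n) (tau : {ffun 'I_n -> int})
  : {fset vec n} := [fset shiftv a tau | a in conset (delset J nu) mu]%fset.
Definition minor_ok n (J : {fset vec n}) (nu mu : vec n) (tau : {ffun 'I_n -> int})
  : Prop :=
  (exists2 a, a \in J &
     vle (vadd mu (dmin (delset J nu))) a /\ vle (vadd a nu) (dmax J)) /\
  (forall i, (0 <= (dmin (conset (delset J nu) mu) i)%:Z + tau i)%R).
Definition minor_emb n (mu : vec n) (tau : {ffun 'I_n -> int}) (a : vec n) : vec n :=
  [ffun i => `|((a i)%:Z + (mu i)%:Z - tau i)%R|%N].

Definition permv n (s : 'S_n) (a : vec n) : vec n := [ffun i => a ((s^-1)%g i)].
Definition permset n (s : 'S_n) (J : {fset vec n}) : {fset vec n} :=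
  [fset permv s a | a in J]%fset.

Definition extv n (a : vec n) : vec n.+1 :=
  [ffun i => if unlift ord_max i is Some j then a j else 0].
Definition extset n (J : {fset vec n}) : {fset vec n.+1} := [fset extv a | a in J]%fset.
Definition resv n (a : vec n.+1) : vec n := [ffun j => a (lift ord_max j)].

Inductive PE : forall n n', {fset vec n} -> {fset vec n'} -> (vec n -> vec n') -> Prop :=
| PE_minor n r (J : {fset vec n}) (nu mu : vec n) (tau : {ffun 'I_n -> int}) :
    Mconvex r J -> minor_ok J nu mu tau ->
    PE (minor J nu mu tau) J (minor_emb mu tau)
| PE_perm n r (J : {fset vec n}) (s : 'S_n) :
    Mconvex r J -> PE J (permset s J) (permv s)
| PE_ext n r (J : {fset vec n}) :
    Mconvex r J -> PE J (extset J) (@extv n)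
| PE_res n r (J : {fset vec n}) :
    Mconvex r J -> PE (extset J) J (@resv n)
| PE_comp n1 n2 n3 (J1 : {fset vec n1}) (J2 : {fset vec n2}) (J3 : {fset vec n3})
    (f : vec n1 -> vec n2) (g : vec n2 -> vec n3) :
    PE J1 J2 f -> PE J2 J3 g -> PE J1 J3 (g \o f).

Definition bij_on n n' (J : {fset vec n}) (J' : {fset vec n'}) (iota : vec n -> vec n')
  : Prop :=
  {in J &, injective iota} /\ (forall b, b \in J' -> exists2 a, a \in J & iota a = b).

Definition pullback (F : tract) n n' (J : {fset vec n}) (iota : vec n -> vec n')
  (rho : vec n' -> tF F) : vec n -> tF F :=
  fun a => if a \in J then rho (iota a) else None.

(* Main.v *)
Require Import Defs.
From Stdlib Require Import FunctionalExtensionality.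
From mathcomp Require Import all_boot all_order all_algebra all_fingroup finmap zify.
Set Implicit Arguments. Unset Strict Implicit. Unset Printing Implicit Defensive.
Import Order.TTheory GRing.Theory Num.Theory.

Ltac zgen := repeat match goal with |- context [@fun_of_fin ?T ?F ?P ?f ?x] =>
  let y := fresh "y" in pose y := @fun_of_fin T F P f x;
  repeat match goal with |- context [@fun_of_fin ?T2 ?F2 ?P2 f x] =>
    change (@fun_of_fin T2 F2 P2 f x) with y end;
  clearbody y; let T0 := type of y in let T1 := eval hnf in T0 in change T1 in y end.
Ltac zlia := zgen; lia.

Section Basics.
Variable n : nat.
Implicit Types a b x : vec n.

Lemma vaddE a b t : vadd a b t = a t + b t. Proof. by rewrite ffunE. Qed.
Lemma vsubE a b t : vsub a b t = a t - b t. Proof. by rewrite ffunE. Qed.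
Lemma unitvE (i t : 'I_n) : unitv i t = (t == i). Proof. by rewrite ffunE. Qed.
Lemma sumunitsE m (f : 'I_m -> 'I_n) t : sumunits f t = \sum_(k < m) (f k == t). Proof. by rewrite ffunE. Qed.
Lemma unitv_le_sum m (f : 'I_m -> 'I_n) k t : unitv (f k) t <= sumunits f t.
Proof. rewrite unitvE sumunitsE (bigD1 k) //= eq_sym; exact: leq_addr. Qed.

Lemma vleP a b : reflect (forall t, a t <= b t) (vle a b).
Proof. exact: forallP. Qed.

Lemma bigmin_le (T : eqType) (s : seq T) (d : nat) (f : T -> nat) (x : T) :
  x \in s -> \big[minn/d]_(y <- s) f y <= f x.
Proof.
elim: s => //= y s IH; rewrite inE big_cons => /orP [/eqP-> | /IH]; first exact: geq_minl.
move=> h; exact: leq_trans (geq_minr _ _) h.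
Qed.

Lemma bigmin_att (T : eqType) (s : seq T) (d : nat) (f : T -> nat) :
  \big[minn/d]_(y <- s) f y = d \/ exists2 x, x \in s & \big[minn/d]_(y <- s) f y = f x.
Proof.
elim: s => [|y s IH]; first by left; rewrite big_nil.
rewrite big_cons; case: (leqP (f y) (\big[minn/d]_(y <- s) f y)) => h.
  by right; exists y; rewrite ?inE ?eqxx //; apply/minn_idPl.
case: IH => [->|[x xs ->]]; first by left.
by right; exists x => //; rewrite inE xs orbT.
Qed.

Lemma bigmax_ge (T : eqType) (s : seq T) (f : T -> nat) (x : T) :
  x \in s -> f x <= \max_(y <- s) f y.
Proof.
elim: s => //= y s IH; rewrite inE big_cons => /orP [/eqP-> | /IH]; first exact: leq_maxl.
move=> h; exact: leq_trans h (leq_maxr _ _).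
Qed.

Lemma bigmax_att (T : eqType) (s : seq T) (f : T -> nat) :
  \max_(y <- s) f y = 0 \/ exists2 x, x \in s & \max_(y <- s) f y = f x.
Proof.
elim: s => [|y s IH]; first by left; rewrite big_nil.
rewrite big_cons; case: (leqP (\max_(y <- s) f y) (f y)) => h.
  by right; exists y; rewrite ?inE ?eqxx //; apply/maxn_idPl.

case: IH => [->|[x xs ->]]; first by left.
by right; exists x => //; rewrite inE xs orbT.
Qed.

Variable J : {fset vec n}.

Lemma dmin_le a : a \in J -> vle (dmin J) a.
Proof. move=> aJ; apply/vleP => t; rewrite ffunE; apply: bigmin_le; exact: aJ. Qed.

Lemma dmax_ge a : a \in J -> vle a (dmax J).
Proof. move=> aJ; apply/vleP => t; rewrite ffunE; apply: (bigmax_ge (fun y : vec n => y t)); exact: aJ. Qed.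

Lemma dminI x : (forall t, exists2 b, b \in J & b t <= x t) -> vle (dmin J) x.
Proof.
move=> h; apply/vleP => t; case: (h t) => b bJ le; apply: leq_trans le.
by move/vleP: (dmin_le bJ).
Qed.

Lemma dmaxI x : (forall t, exists2 b, b \in J & x t <= b t) -> vle x (dmax J).
Proof.
move=> h; apply/vleP => t; case: (h t) => b bJ le; apply: leq_trans le _.
by move/vleP: (dmax_ge bJ).
Qed.

Lemma dminP x : J != fset0 -> vle (dmin J) x -> forall t, exists2 b, b \in J & b t <= x t.
Proof.
move=> /fset0Pn [b0 b0J] /vleP h t; move: (h t); rewrite ffunE.
case: (bigmin_att J (dmax J t) (fun y => y t)) => [->|[b bJ ->]] le; last by exists b.
exists b0 => //; apply: leq_trans le; by move/vleP: (dmax_ge b0J).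
Qed.

Lemma dmaxP x : J != fset0 -> vle x (dmax J) -> forall t, exists2 b, b \in J & x t <= b t.
Proof.
move=> /fset0Pn [b0 b0J] /vleP h t; move: (h t); rewrite ffunE.
case: (bigmax_att J (fun y => y t)) => [->|[b bJ ->]] le; last by exists b.
by exists b0 => //; apply: leq_trans le _.
Qed.

End Basics.

Definition rank n r (J : {fset vec n}) := forall a, a \in J -> vsum a = r.

Lemma transfer (F : tract) n m r r' (J : {fset vec n}) (K : {fset vec m})
    (sg : vec n -> tF F) (rho : vec m -> tF F) :
  is_rep r' K rho -> (forall a, sg a <> None <-> a \in J) ->
  (forall s, 2 <= s <= r -> forall al : vec n, vsum al = r - s -> vle (dmin J) al ->
   forall (i : 'I_s.+1 -> 'I_n) (j : 'I_s.-1 -> 'I_n),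
   vle (vadd (vadd al (sumunits i)) (sumunits j)) (dmax J) ->
   exists al' : vec m, exists i' : 'I_s.+1 -> 'I_m, exists j' : 'I_s.-1 -> 'I_m,
   [/\ vsum al' = r' - s, 2 <= s <= r', vle (dmin K) al',
       vle (vadd (vadd al' (sumunits i')) (sumunits j')) (dmax K) &
       forall k, sg (vsub (vadd al (sumunits i)) (unitv (i k))) =
                 rho (vsub (vadd al' (sumunits i')) (unitv (i' k))) /\
                 sg (vadd (vadd al (unitv (i k))) (sumunits j)) =
                 rho (vadd (vadd al' (unitv (i' k))) (sumunits j'))]) ->
  is_rep r J sg.
Proof.
move=> [_ hrho] hsupp htr; split=> // s hs al hal hmin i j hmax.
have [al' [i' [j' [h1 h2 h3 h4 h5]]]] := htr s hs al hal hmin i j hmax.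
have := hrho s h2 al' h1 h3 i' j' h4.
congr fnull; apply: eq_map => k; by case: (h5 k) => -> ->.
Qed.

Definition fsupp (F : tract) n (J : {fset vec n}) (sg : vec n -> tF F) :=
  forall a, sg a <> None <-> a \in J.

Lemma rep_supp (F : tract) n r (J : {fset vec n}) (sg : vec n -> tF F) :
  is_rep r J sg -> forall a, a \notin J -> sg a = None.
Proof. move=> [h _] a aJ; case E: (sg a) => [x|] //; exfalso; move/negP: aJ; apply; apply/h; by rewrite E. Qed.

Lemma pullback_supp (F : tract) n n' (J : {fset vec n}) (J' : {fset vec n'}) iota r'
   (rho : vec n' -> tF F) :
  is_rep r' J' rho -> (forall a, a \in J -> iota a \in J') ->
  fsupp J (pullback J iota rho).
Proof.
move=> [h _] hm a; rewrite /pullback; case: ifP => aJ; last by split.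
split=> // _; apply/h; exact: hm.
Qed.

Lemma rep_ext (F : tract) n r (J : {fset vec n}) (s1 s2 : vec n -> tF F) :
  (forall a, s1 a = s2 a) -> is_rep r J s1 -> is_rep r J s2.
Proof. by move=> h; have -> : s1 = s2 by apply: functional_extensionality. Qed.

Lemma fmul1 (F : tract) (x : tF F) : fmul (Some (tone F)) x = x.
Proof. by case: x => // y /=; rewrite tmul1. Qed.

Lemma equiv_ext (F : tract) n (s1 s2 : vec n -> tF F) :
  (forall a, s1 a = s2 a) -> rep_equiv s1 s2.
Proof. move=> h; exists (tone F) => a; by rewrite fmul1 h. Qed.

Lemma equiv_trans (F : tract) n (s1 s2 s3 : vec n -> tF F) :
  rep_equiv s1 s2 -> rep_equiv s2 s3 -> rep_equiv s1 s3.
Proof.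
move=> [c1 h1] [c2 h2]; exists (tmul c2 c1) => a; rewrite h2 h1.
by case: (s1 a) => //= x; rewrite tmulA.
Qed.

Lemma equiv_pullback (F : tract) n n' (J : {fset vec n}) (iota : vec n -> vec n')
  (rho1 rho2 : vec n' -> tF F) :
  rep_equiv rho1 rho2 -> rep_equiv (pullback J iota rho1) (pullback J iota rho2).
Proof. move=> [c h]; exists c => a; rewrite /pullback; case: ifP => //. Qed.

Lemma equiv_back (F : tract) n n' r' (J : {fset vec n}) (J' : {fset vec n'}) iota
  (rho1 rho2 : vec n' -> tF F) :
  bij_on J J' iota -> is_rep r' J' rho1 -> is_rep r' J' rho2 ->
  rep_equiv (pullback J iota rho1) (pullback J iota rho2) -> rep_equiv rho1 rho2.
Proof.
move=> [_ hs] h1 h2 [c h]; exists c => b.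
case: (boolP (b \in J')) => bJ; last by rewrite !(rep_supp h1) ?(rep_supp h2).
have [a aJ <-] := hs b bJ; have := h a; by rewrite /pullback aJ.
Qed.

Definition Qprop (F : tract) n n' (J : {fset vec n}) (J' : {fset vec n'}) (f : vec n -> vec n') : Prop :=
 [/\ (forall a, a \in J -> f a \in J'), {in J &, injective f},
     (forall r', rank r' J' -> exists r, rank r J),
     (forall r r' (rho : vec n' -> tF F), J != fset0 -> rank r J -> rank r' J' ->
        is_rep r' J' rho -> is_rep r J (pullback J f rho)) &
     (bij_on J J' f -> forall r r' (sg : vec n -> tF F), J != fset0 -> rank r J -> rank r' J' ->
        is_rep r J sg -> exists2 rho, is_rep r' J' rho & rep_equiv (pullback J f rho) sg)].

Lemma Qcomp (F : tract) n1 n2 n3 (J1 : {fset vec n1}) (J2 : {fset vec n2}) (J3 : {fset vec n3})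
  (f : vec n1 -> vec n2) (g : vec n2 -> vec n3) :
  Qprop F J1 J2 f -> Qprop F J2 J3 g -> Qprop F J1 J3 (g \o f).
Proof.
move=> [fm fi fr ff fb] [gm gi gr gf gb].
have pbE (rho : vec n3 -> tF F) a : pullback J1 (g \o f) rho a = pullback J1 f (pullback J2 g rho) a.
  by rewrite /pullback; case: ifP => // aJ; rewrite fm.
have ne2 : J1 != fset0 -> J2 != fset0.
  move=> /fset0Pn [a aJ]; apply/fset0Pn; exists (f a); exact: fm.
split.
- move=> a aJ; apply: gm; exact: fm.
- move=> a b aJ bJ /= /gi h; apply: fi => //; apply: h; exact: fm.
- move=> r3 /gr [r2 /fr] //.
- move=> r1 r3 rho ne h1 h3 hrho.
  have [r2 h2] := gr r3 h3.
  apply: (rep_ext (s1 := pullback J1 f (pullback J2 g rho))); first by move=> a; rewrite pbE.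
  apply: (ff r1 r2) => //; apply: (gf r2 r3) => //; exact: ne2.
- move=> [bi bs] r1 r3 sg ne h1 h3 hsg.
  have [r2 h2] := gr r3 h3.
  have bg : bij_on J2 J3 g.
    split=> // c cJ; have [a aJ <-] := bs c cJ; exists (f a) => //; exact: fm.
  have bf : bij_on J1 J2 f.
    split=> // b bJ; have [a aJ ea] := bs (g b) (gm b bJ); exists a => //.
    by apply: gi => //; exact: fm.
  have [rho2 hr2 e2] := fb bf r1 r2 sg ne h1 h2 hsg.
  have [rho3 hr3 e3] := gb bg r2 r3 rho2 (ne2 ne) h2 h3 hr2.
  exists rho3 => //; apply: equiv_trans e2; apply: equiv_trans (equiv_pullback J1 f e3).
  by apply: equiv_ext => a; rewrite pbE.
Qed.

Section Perm.
Variable n : nat.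
Implicit Types (a b : vec n) (p : 'S_n).

Lemma permvE p a t : permv p a t = a ((p^-1)%g t). Proof. by rewrite ffunE. Qed.
Lemma permv_add p a b : permv p (vadd a b) = vadd (permv p a) (permv p b).
Proof. by apply/ffunP => t; rewrite !ffunE. Qed.
Lemma permv_sub p a b : permv p (vsub a b) = vsub (permv p a) (permv p b).
Proof. by apply/ffunP => t; rewrite !ffunE. Qed.
Lemma perm_eqV p (x t : 'I_n) : (x == (p^-1)%g t) = (p x == t).
Proof. by rewrite -(inj_eq (@perm_inj _ p) x) permKV. Qed.
Lemma permv_unit p i : permv p (unitv i) = unitv (p i).
Proof. by apply/ffunP => t; rewrite !ffunE eq_sym perm_eqV eq_sym. Qed.
Lemma permv_sum p m (f : 'I_m -> 'I_n) : permv p (sumunits f) = sumunits (fun k => p (f k)).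
Proof. apply/ffunP => t; rewrite !ffunE; apply: eq_bigr => k _; by rewrite perm_eqV. Qed.
Lemma permvK p a : permv (p^-1)%g (permv p a) = a.
Proof. by apply/ffunP => t; rewrite !ffunE invgK permK. Qed.
Lemma permv_inj p : injective (permv p).
Proof. by move=> a b h; rewrite -(permvK p a) h permvK. Qed.
Lemma vsum_permv p a : vsum (permv p a) = vsum a.
Proof.
rewrite /vsum (reindex_inj (@perm_inj _ p)); apply: eq_bigr => t _; by rewrite ffunE permK.
Qed.

Lemma permset_mem p (K : {fset vec n}) a : (permv p a \in permset p K) = (a \in K).
Proof. rewrite /permset mem_imfset //; exact: permv_inj. Qed.

Lemma permsetK p (J : {fset vec n}) : permset (p^-1)%g (permset p J) = J.
Proof.
apply/fsetP => x; apply/imfsetP/idP => [[y /imfsetP [z zJ ->] ->]|xJ]; first by rewrite permvK.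
exists (permv p x); first by rewrite permset_mem. by rewrite permvK.
Qed.

Lemma permF (F : tract) r p (K : {fset vec n}) (rho : vec n -> tF F) :
  K != fset0 -> is_rep r (permset p K) rho -> is_rep r K (fun a => rho (permv p a)).
Proof.
move=> ne hrho; apply: (transfer hrho).
  move=> a; case: hrho => h _; rewrite h /permset mem_imfset //; exact: permv_inj.
move=> s hs al hal hmin i j hmax.
exists (permv p al), (fun k => p (i k)), (fun k => p (j k)); split => //.
- by rewrite vsum_permv.
- apply: dminI => t; have [b bK le] := dminP ne hmin ((p^-1)%g t).
  exists (permv p b); first by rewrite permset_mem. by rewrite !permvE.
- rewrite -!permv_sum -!permv_add; apply: dmaxI => t.
  have [b bK le] := dmaxP ne hmax ((p^-1)%g t).
  exists (permv p b); first by rewrite permset_mem. by rewrite !permvE.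
- move=> k; by rewrite -!permv_sum -!permv_unit -!permv_add -permv_sub.
Qed.

Lemma Qperm (F : tract) (J : {fset vec n}) p : Qprop F J (permset p J) (permv p).
Proof.
have memP a : (permv p a \in permset p J) = (a \in J) by rewrite mem_imfset //; exact: permv_inj.
split.
- by move=> a aJ; rewrite memP.
- by move=> a b _ _; exact: permv_inj.
- move=> r' h; exists r' => a aJ; rewrite -(vsum_permv p); apply: h; by rewrite memP.
- move=> r r' rho ne hr hr' hrho.
  have er : r = r'.
    by case/fset0Pn: ne => a aJ; rewrite -(hr a aJ) -(vsum_permv p); apply: hr'; rewrite memP.
  subst r'; apply: (rep_ext (s1 := fun a => rho (permv p a))); last exact: permF.
  move=> a; rewrite /pullback; case: ifP => // aJ; apply: (rep_supp hrho); by rewrite memP aJ.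
- move=> _ r r' sg ne hr hr' hsg.
  have er : r = r'.
    by case/fset0Pn: ne => a aJ; rewrite -(hr a aJ) -(vsum_permv p); apply: hr'; rewrite memP.
  subst r'; exists (fun b => sg (permv (p^-1)%g b)).
    apply: permF; last by rewrite permsetK.
    case/fset0Pn: ne => a aJ; apply/fset0Pn; exists (permv p a); by rewrite memP.
  apply: equiv_ext => a; rewrite /pullback; case: ifP => aJ; first by rewrite permvK.
  by rewrite (rep_supp hsg) ?aJ.
Qed.
End Perm.

Section Ext.
Variable n : nat.
Implicit Types (a : vec n) (b : vec n.+1).

Lemma extv_lift a (j : 'I_n) : extv a (lift ord_max j) = a j. Proof. by rewrite ffunE liftK. Qed.
Lemma extv_max a : extv a ord_max = 0. Proof. by rewrite ffunE unlift_none. Qed.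
Lemma extvE a t : extv a t = if unlift ord_max t is Some j then a j else 0. Proof. by rewrite ffunE. Qed.

Lemma extv_add a a' : extv (vadd a a') = vadd (extv a) (extv a').
Proof. apply/ffunP => t; rewrite !ffunE; by case: unliftP => [j _|_]; rewrite ?ffunE. Qed.
Lemma extv_sub a a' : extv (vsub a a') = vsub (extv a) (extv a').
Proof. apply/ffunP => t; rewrite !ffunE; by case: unliftP => [j _|_]; rewrite ?ffunE. Qed.
Lemma extv_unit (i : 'I_n) : extv (unitv i) = unitv (lift ord_max i).
Proof.
apply/ffunP => t; rewrite !ffunE; case: unliftP => [j ->|->]; rewrite ?ffunE.
  by rewrite (inj_eq lift_inj).
by rewrite (negbTE (neq_lift _ _)).
Qed.
Lemma extv_sum m (f : 'I_m -> 'I_n) : extv (sumunits f) = sumunits (fun k => lift ord_max (f k)).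
Proof.
apply/ffunP => t; rewrite !ffunE; case: unliftP => [j ->|->]; rewrite ?ffunE.
  by apply: eq_bigr => k _; rewrite (inj_eq lift_inj).
by rewrite big1 // => k _; rewrite eq_sym (negbTE (neq_lift _ _)).
Qed.
Lemma resv_extv a : resv (extv a) = a.
Proof. by apply/ffunP => t; rewrite ffunE extv_lift. Qed.
Lemma extv_inj : injective (@extv n).
Proof. by move=> a a' h; rewrite -(resv_extv a) h resv_extv. Qed.
Lemma extv_resv b : b ord_max = 0 -> extv (resv b) = b.
Proof. move=> h; apply/ffunP => t; rewrite !ffunE; by case: unliftP => [j ->|->]; rewrite ?ffunE. Qed.
Lemma vsum_extv a : vsum (extv a) = vsum a.
Proof.
rewrite /vsum big_ord_recr /= extv_max addn0; apply: eq_bigr => i _.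
have -> : widen_ord (leqnSn n) i = lift ord_max i by apply: val_inj; rewrite /= /bump leqNgt ltn_ord.
by rewrite extv_lift.
Qed.

Lemma extset_mem (K : {fset vec n}) a : (extv a \in extset K) = (a \in K).
Proof. rewrite /extset mem_imfset //; exact: extv_inj. Qed.
Lemma extsetP (K : {fset vec n}) b : b \in extset K -> exists2 a, a \in K & b = extv a.
Proof. by move/imfsetP. Qed.

Lemma extF (F : tract) r (K : {fset vec n}) (rho : vec n.+1 -> tF F) :
  K != fset0 -> is_rep r (extset K) rho -> is_rep r K (fun a => rho (extv a)).
Proof.
move=> ne hrho; apply: (transfer hrho).
  move=> a; case: hrho => h _; by rewrite h extset_mem.
move=> s hs al hal hmin i j hmax.
have [a0 a0K] := fset0Pn _ ne.
exists (extv al), (fun k => lift ord_max (i k)), (fun k => lift ord_max (j k)); split => //.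
- by rewrite vsum_extv.
- apply: dminI => t; case: (unliftP ord_max t) => [t0 ->|->].
    have [b bK le] := dminP ne hmin t0.
    by exists (extv b); rewrite ?extset_mem // !extv_lift.
  by exists (extv a0); rewrite ?extset_mem // !extv_max.
- rewrite -!extv_sum -!extv_add; apply: dmaxI => t; case: (unliftP ord_max t) => [t0 ->|->].
    have [b bK le] := dmaxP ne hmax t0.
    by exists (extv b); rewrite ?extset_mem // !extv_lift.
  by exists (extv a0); rewrite ?extset_mem // !extv_max.
- move=> k; by rewrite -!extv_sum -!extv_unit -!extv_add -extv_sub.
Qed.

Lemma pullback_extv (F : tract) r (K : {fset vec n}) (rho : vec n -> tF F) a :
  is_rep r K rho -> pullback (extset K) (@resv n) rho (extv a) = rho a.
Proof.
move=> h; rewrite /pullback extset_mem resv_extv; case: ifP => // aK.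
by rewrite (rep_supp h) ?aK.
Qed.

Lemma resF (F : tract) r (K : {fset vec n}) (rho : vec n -> tF F) :
  K != fset0 -> is_rep r K rho -> is_rep r (extset K) (pullback (extset K) (@resv n) rho).
Proof.
move=> ne hrho; apply: (transfer (K := K) hrho).
  apply: (pullback_supp hrho) => b /extsetP [a aK ->]; by rewrite resv_extv.
have ne' : extset K != fset0.
  have [a0 a0K] := fset0Pn _ ne; apply/fset0Pn; exists (extv a0); by rewrite extset_mem.
move=> s hs al hal hmin i j hmax.
have [b bK le] := dmaxP ne' hmax ord_max.
have [a aK eb] := extsetP bK; move: le; rewrite eb extv_max !vaddE leqn0 => hz.
have hi : forall k, i k < n.
  move=> k; have := unitv_le_sum i k ord_max; rewrite unitvE.
  have -> : sumunits i ord_max = 0 by lia.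
  rewrite leqn0 eqb0 => hk; rewrite ltn_neqAle -ltnS ltn_ord andbT.
  apply: contra hk => /eqP e; apply/eqP; exact: val_inj.
have hj : forall k, j k < n.
  move=> k; have := unitv_le_sum j k ord_max; rewrite unitvE.
  have -> : sumunits j ord_max = 0 by lia.
  rewrite leqn0 eqb0 => hk; rewrite ltn_neqAle -ltnS ltn_ord andbT.
  apply: contra hk => /eqP e; apply/eqP; exact: val_inj.
pose i' k := Ordinal (hi k); pose j' k := Ordinal (hj k).
have ei : i = fun k => lift ord_max (i' k).
  apply: functional_extensionality => k; apply: val_inj; by rewrite /= /bump leqNgt hi.
have ej : j = fun k => lift ord_max (j' k).
  apply: functional_extensionality => k; apply: val_inj; by rewrite /= /bump leqNgt hj.
have ea : al = extv (resv al) by rewrite extv_resv //; lia.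
move: hmin hmax hal; rewrite ei ej ea -!extv_sum -!extv_add vsum_extv => hmin hmax hal.
exists (resv al), i', j'; split => //.
- apply: dminI => t; have [b' /extsetP [a' a'K ->] le] := dminP ne' hmin (lift ord_max t).
  by exists a'; move: le; rewrite !extv_lift.
- apply: dmaxI => t; have [b' /extsetP [a' a'K ->] le] := dmaxP ne' hmax (lift ord_max t).
  by exists a'; move: le; rewrite !extv_lift.
- move=> k; rewrite -!extv_unit -?extv_sum -!extv_add -?extv_sub.
  by rewrite !(pullback_extv _ hrho).
Qed.

Lemma Qext (F : tract) (J : {fset vec n}) : Qprop F J (extset J) (@extv n).
Proof.
split.
- by move=> a aJ; rewrite extset_mem.
- by move=> a b _ _; exact: extv_inj.
- move=> r' h; exists r' => a aJ; rewrite -vsum_extv; apply: h; by rewrite extset_mem.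
- move=> r r' rho ne hr hr' hrho.
  have er : r = r'.
    by case/fset0Pn: ne => a aJ; rewrite -(hr a aJ) -vsum_extv; apply: hr'; rewrite extset_mem.
  subst r'; apply: (rep_ext (s1 := fun a => rho (extv a))); last exact: extF.
  move=> a; rewrite /pullback; case: ifP => // aJ; apply: (rep_supp hrho); by rewrite extset_mem aJ.
- move=> _ r r' sg ne hr hr' hsg.
  have er : r = r'.
    by case/fset0Pn: ne => a aJ; rewrite -(hr a aJ) -vsum_extv; apply: hr'; rewrite extset_mem.
  subst r'; exists (pullback (extset J) (@resv n) sg); first exact: resF.
  apply: equiv_ext => a; rewrite {1}/pullback; case: ifP => aJ; first exact: pullback_extv hsg.
  by rewrite (rep_supp hsg) ?aJ.
Qed.

Lemma Qres (F : tract) (J : {fset vec n}) : Qprop F (extset J) J (@resv n).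
Proof.
split.
- by move=> b /extsetP [a aJ ->]; rewrite resv_extv.
- by move=> b b' /extsetP [a aJ ->] /extsetP [a' a'J ->]; rewrite !resv_extv => ->.
- move=> r' h; exists r' => b /extsetP [a aJ ->]; rewrite vsum_extv; exact: h.
- move=> r r' rho ne hr hr' hrho.
  have er : r = r'.
    case/fset0Pn: ne => b bJ; have [a aJ eb] := extsetP bJ.
    by rewrite -(hr b bJ) eb vsum_extv hr'.
  subst r'; apply: resF => //.
  case/fset0Pn: ne => b /extsetP [a aJ _]; apply/fset0Pn; by exists a.
- move=> _ r r' sg ne hr hr' hsg.
  have ne0 : J != fset0.
    case/fset0Pn: ne => b /extsetP [a aJ _]; apply/fset0Pn; by exists a.
  have er : r = r'.
    case/fset0Pn: ne => b bJ; have [a aJ eb] := extsetP bJ.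
    by rewrite -(hr b bJ) eb vsum_extv hr'.
  subst r'; exists (fun a => sg (extv a)); first exact: extF.
  apply: equiv_ext => b; rewrite /pullback; case: ifP => bJ.
    by have [a aJ ->] := extsetP bJ; rewrite resv_extv.
  by rewrite (rep_supp hsg) ?bJ.
Qed.
End Ext.

Section Minor.
Variables (n : nat) (J : {fset vec n}) (nu mu : vec n) (tau : {ffun 'I_n -> int}).
Local Notation D := (delset J nu).
Local Notation C := (conset D mu).
Local Notation M := (minor J nu mu tau).
Local Notation emb := (minor_emb mu tau).
Local Notation h := (fun b : vec n => shiftv (vsub b mu) tau).

Lemma memD a : (a \in D) = (a \in J) && vle (vadd a nu) (dmax J).
Proof. by rewrite /delset !inE. Qed.

Lemma memC c : c \in C -> exists2 a, a \in D & vle (vadd (dmin D) mu) a /\ c = vsub a mu.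
Proof.
case/imfsetP => a /=; rewrite !inE => /andP [aD le] ->; exists a => //; rewrite memD; exact: aD.
Qed.

Lemma MI a : a \in J -> vle (vadd a nu) (dmax J) -> vle (vadd (dmin D) mu) a -> h a \in M.
Proof.
move=> aJ le1 le2; apply/imfsetP; exists (vsub a mu) => //.
apply/imfsetP; exists a => //=; rewrite !inE le2 le1 andbT andbT; exact: aJ.
Qed.

Lemma vsumZ (a : vec n) : ((vsum a)%:Z = \sum_t (a t)%:Z)%R.
Proof. by rewrite /vsum (big_morph Posz PoszD (erefl _)). Qed.

Lemma vsum_aff (x y : vec n) (d : 'I_n -> int) :
  (forall t, (x t)%:Z = (y t)%:Z + d t)%R -> ((vsum x)%:Z = (vsum y)%:Z + \sum_t d t)%R.
Proof. move=> e; rewrite !vsumZ -big_split; apply: eq_bigr => t _; exact: e. Qed.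


Lemma embE v t : emb v t = `|((v t)%:Z + (mu t)%:Z - tau t)%R|%N.
Proof. by rewrite ffunE. Qed.
Lemma hE v t : h v t = `|(((v t - mu t)%N)%:Z + tau t)%R|%N.
Proof. by rewrite !ffunE. Qed.

Hypothesis htau : forall t, (0 <= (dmin C t)%:Z + tau t)%R.

Lemma Mel b : b \in M -> exists2 a, a \in J &
  [/\ vle (vadd a nu) (dmax J), vle (vadd (dmin D) mu) a, emb b = a &
      forall t, mu t <= a t /\ ((b t)%:Z = (a t)%:Z - (mu t)%:Z + tau t)%R].
Proof.
case/imfsetP => c cC ->; have [a aD [le ec]] := memC cC.
move: (aD); rewrite memD => /andP [aJ le1].
have hc t : (0 <= (c t)%:Z + tau t)%R.
  have := htau t; move/vleP: (@dmin_le _ C c cC) => /(_ t); zlia.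
have hm t : mu t <= a t by move/vleP: le => /(_ t); rewrite vaddE; zlia.
subst c; exists a => //; split => //.
  apply/ffunP => t; rewrite !ffunE; have := hc t; have := hm t; rewrite vsubE; zlia.
move=> t; split => //; rewrite !ffunE; have := hc t; have := hm t; rewrite vsubE; zlia.
Qed.

Lemma M_emb b : b \in M -> emb b \in J.
Proof. by case/Mel => a aJ [_ _ -> _]. Qed.

Lemma M_inj : {in M &, injective emb}.
Proof.
move=> x y /Mel [a aJ [_ _ ea hx]] /Mel [a' a'J [_ _ ea' hy]] e.
move: ea'; rewrite -e ea => ea'; subst a'.
apply/ffunP => t; have [_ h1] := hx t; have [_ h2] := hy t; move: h1 h2; zlia.
Qed.

Lemma M_rank rJ : rank rJ J -> forall b, b \in M ->
  ((vsum b)%:Z = rJ%:Z + \sum_t (tau t - (mu t)%:Z))%R.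
Proof.
move=> hr b /Mel [a aJ [_ _ _ hb]]; rewrite -(hr a aJ); apply: vsum_aff => t.
have [_ ->] := hb t; zlia.
Qed.

Lemma M_h b : b \in M -> h (emb b) = b.
Proof.
case/Mel => a aJ [_ _ -> hb]; apply/ffunP => t; rewrite hE.
have [h1 h2] := hb t; move: h1 h2; zlia.
Qed.

End Minor.

Lemma Qminor (F : tract) n r (J : {fset vec n}) nu mu tau :
  Mconvex r J -> minor_ok J nu mu tau -> Qprop F (minor J nu mu tau) J (minor_emb mu tau).
Proof.
move=> hJ [_ htau].
set M := minor J nu mu tau.
set Dl := (\sum_t (tau t - (mu t)%:Z))%R.
have eR rM rJ : rank rM M -> rank rJ J -> M != fset0 -> (rM%:Z = rJ%:Z + Dl)%R.
  move=> hrM hrJ /fset0Pn [b0 b0M]; rewrite -(hrM b0 b0M); exact: M_rank.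
split.
- move=> b; exact: M_emb htau b.
- exact: M_inj htau.
- move=> rJ hr; case: (boolP (M == fset0)) => [/eqP-> | /fset0Pn [b0 b0M]].
    by exists 0 => a; rewrite in_fset0.
  exists (vsum b0) => b bM.
  have := M_rank htau hr bM; have := M_rank htau hr b0M; rewrite -/Dl; lia.
- move=> rM rJ rho ne hrM hrJ hrho.
  have eR' := eR rM rJ hrM hrJ ne.
  have [b0 b0M] := fset0Pn _ ne.
  apply: (transfer hrho); first exact: (pullback_supp hrho (M_emb htau)).
  move=> s hs al hal hmin i j hmax.
  pose x := vadd (vadd al (sumunits i)) (sumunits j).
  have low t : exists2 a, a \in J & [/\ mu t <= a t, dmin (delset J nu) t + mu t <= a t &
                 ((a t)%:Z - (mu t)%:Z + tau t <= (al t)%:Z)%R].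
    have [b bM le] := dminP ne hmin t; have [a aJ [_ le2 _ hb]] := Mel htau bM.
    exists a => //; have [h1 h2] := hb t; move/vleP: le2 => /(_ t); rewrite vaddE => h3.
    split => //; move: le h2; zlia.
  have up t : exists2 a, a \in J & (a t + nu t <= dmax J t /\
                 ((x t)%:Z <= (a t)%:Z - (mu t)%:Z + tau t)%R).
    have [b bM le] := dmaxP ne hmax t; have [a aJ [le1 _ _ hb]] := Mel htau bM.
    exists a => //; have [_ h2] := hb t; move/vleP: le1 => /(_ t); rewrite vaddE => h3.
    split => //; move: le h2; rewrite /x; zlia.
  have pos t : (tau t <= (al t)%:Z)%R.
    have [a _ [h1 _ h3]] := low t; move: h1 h3; zlia.
  pose al' := minor_emb mu tau al.
  have alE t : ((al' t)%:Z = (al t)%:Z + (mu t)%:Z - tau t)%R.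
    rewrite embE; have := pos t; zlia.
  have hZ : ((vsum al')%:Z = rJ%:Z - s%:Z)%R.
    have := @vsum_aff n al' al (fun t => - (tau t - (mu t)%:Z))%R.
    rewrite sumrN -/Dl => ->; last by move=> t; have := alE t; zlia.
    move: hal hs eR'; lia.
  have key (y : vec n) : (forall t, al t <= y t <= x t) ->
      pullback M (minor_emb mu tau) rho y = rho (minor_emb mu tau y).
    move=> hy; rewrite /pullback; case: ifP => // yM; symmetry.
    apply: (rep_supp hrho); apply/negP => yJ; move/negP: yM; apply.
    have eh : y = shiftv (vsub (minor_emb mu tau y) mu) tau.
      apply/ffunP => t; rewrite hE embE; have := hy t; have := pos t; zlia.
    rewrite eh; apply: MI => //.
      apply/vleP => t; rewrite vaddE; have [a aJ [h1 h2]] := up t.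
      rewrite embE; have := hy t; have := pos t; move: h1 h2; zlia.
    apply/vleP => t; rewrite vaddE embE; have [a _ [h1 h2 h3]] := low t.
    have := hy t; move: h1 h2 h3; zlia.
  exists al', i, j; split.
  + move: hZ; lia.
  + move: hZ hs; lia.
  + apply: dminI => t; have [a aJ [_ _ h3]] := low t; exists a => //.
    have := alE t; move: h3; zlia.
  + apply: dmaxI => t; have [a aJ [_ h]] := up t; exists a => //.
    rewrite !vaddE; have := alE t; move: h; rewrite /x !vaddE; zlia.
  + move=> k; split.
      rewrite key; last by move=> t; rewrite /x vsubE !vaddE; have := unitv_le_sum i k t; zlia.
      congr rho; apply/ffunP => t; rewrite embE !vsubE !vaddE.
      have := alE t; have := unitv_le_sum i k t; have := pos t; zlia.
    rewrite key; last by move=> t; rewrite /x !vaddE; have := unitv_le_sum i k t; zlia.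
    congr rho; apply/ffunP => t; rewrite embE !vaddE.
    have := alE t; have := pos t; zlia.
- move=> [_ hsurj] rM rJ sg ne hrM hrJ hsg.
  have eR' := eR rM rJ hrM hrJ ne.
  have [b0 b0M] := fset0Pn _ ne.
  have neJ : J != fset0 by apply/fset0Pn; exists (minor_emb mu tau b0); apply: (M_emb htau); exact: b0M.
  have Jel a : a \in J -> shiftv (vsub a mu) tau \in M /\
      forall t, mu t <= a t /\ (0 <= (a t)%:Z - (mu t)%:Z + tau t)%R.
    move=> aJ; have [y yM ey] := hsurj a aJ; have [a' a'J [_ _ ea hx]] := Mel htau yM.
    rewrite ea in ey; rewrite ey in hx.
    have ehx : shiftv (vsub a mu) tau = y.
      apply/ffunP => t; rewrite hE; have [h1 h2] := hx t; move: h1 h2; zlia.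
    rewrite ehx; split => // t; have [h1 h2] := hx t; split => //; move: h2; zlia.
  pose rho b := if b \in J then sg (shiftv (vsub b mu) tau) else None.
  exists rho.
    apply: (transfer (J := J) hsg).
      move=> b; rewrite /rho; case: ifP => bJ; last by split.
      split=> // _; have [hM _] := Jel b bJ; by apply/(proj1 hsg).
    move=> s hs al hal hmin i j hmax.
    pose x := vadd (vadd al (sumunits i)) (sumunits j).
    have pos t : mu t <= al t /\ (0 <= (al t)%:Z - (mu t)%:Z + tau t)%R.
      have [a aJ le] := dminP neJ hmin t; have [_ hp] := Jel a aJ.
      have [h1 h2] := hp t; move: le h1 h2; zlia.
    pose al' := shiftv (vsub al mu) tau.
    have alE t : ((al' t)%:Z = (al t)%:Z - (mu t)%:Z + tau t)%R.
      rewrite hE; have [h1 h2] := pos t; move: h1 h2; zlia.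
    have hZ : ((vsum al')%:Z = rM%:Z - s%:Z)%R.
      have := @vsum_aff n al' al (fun t => (tau t - (mu t)%:Z))%R.
      rewrite -/Dl => ->; last by move=> t; have := alE t; zlia.
      move: hal hs eR'; lia.
    have key (y : vec n) : (forall t, al t <= y t) -> rho y = sg (shiftv (vsub y mu) tau).
      move=> hy; rewrite /rho; case: ifP => // yJ; symmetry.
      apply: (rep_supp hsg); apply/negP => hyM; move/negP: yJ; apply.
      have e : minor_emb mu tau (shiftv (vsub y mu) tau) = y.
        apply/ffunP => t; rewrite embE hE; have := hy t; have := pos t; zlia.
      rewrite -e; apply: (M_emb htau); exact: hyM.
    exists al', i, j; split.
    + move: hZ; lia.
    + move: hZ hs; lia.
    + apply: dminI => t; have [a aJ le] := dminP neJ hmin t; have [hM hp] := Jel a aJ.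
      exists (shiftv (vsub a mu) tau) => //; rewrite hE; have := alE t; have := hp t; move: le; zlia.
    + apply: dmaxI => t; have [a aJ le] := dmaxP neJ hmax t; have [hM hp] := Jel a aJ.
      exists (shiftv (vsub a mu) tau) => //; rewrite hE !vaddE; have := alE t; have := hp t.
      move: le; rewrite !vaddE; zlia.
    + move=> k; split.
        rewrite key; last by move=> t; rewrite vsubE !vaddE; have := unitv_le_sum i k t; zlia.
        congr sg; apply/ffunP => t; rewrite hE !vsubE !vaddE.
        have := alE t; have := unitv_le_sum i k t; have := pos t; zlia.
      rewrite key; last by move=> t; rewrite !vaddE; zlia.
      congr sg; apply/ffunP => t; rewrite hE !vaddE.
      have := alE t; have := pos t; zlia.
  apply: equiv_ext => b; rewrite {1}/pullback; case: ifP => bM.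
    have bJ : minor_emb mu tau b \in J by apply: (M_emb htau); exact: bM.
    by rewrite /rho bJ (M_h htau bM).
  by rewrite (rep_supp hsg) ?bM.
Qed.

Lemma PE_Q (F : tract) n n' (J : {fset vec n}) (J' : {fset vec n'}) f :
  PE J J' f -> Qprop F J J' f.
Proof.
elim=> {n n' J J' f}.
- move=> n r J nu mu tau hJ hok; exact: Qminor hJ hok.
- move=> n r J s hJ; exact: Qperm.
- move=> n r J hJ; exact: Qext.
- move=> n r J hJ; exact: Qres.
- move=> n1 n2 n3 J1 J2 J3 f g _ h1 _ h2; exact: Qcomp h1 h2.
Qed.

Lemma Mconvex_rank n r (J : {fset vec n}) : Mconvex r J -> rank r J.
Proof. by case=> _ []. Qed.

Theorem theoremE (F : tract) (n r n' r' : nat)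
    (J : {fset vec n}) (J' : {fset vec n'}) (iota : vec n -> vec n') :
  near_idempotent F -> Mconvex r J -> Mconvex r' J' -> PE J J' iota ->
  (* iota^* rho is an F-representation of J *)
  (forall rho : vec n' -> tF F, is_rep r' J' rho -> is_rep r J (pullback J iota rho)) /\
  (* [rho] |-> [iota^* rho] is well defined on Gr_{J'}(F) -> Gr_J(F) *)
  (forall rho1 rho2 : vec n' -> tF F, is_rep r' J' rho1 -> is_rep r' J' rho2 ->
     rep_equiv rho1 rho2 ->
     rep_equiv (pullback J iota rho1) (pullback J iota rho2)) /\
  (* if iota is bijective, iota^* : Gr_{J'}(F) -> Gr_J(F) is bijective *)
  (bij_on J J' iota ->
     (forall rho1 rho2 : vec n' -> tF F, is_rep r' J' rho1 -> is_rep r' J' rho2 ->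
        rep_equiv (pullback J iota rho1) (pullback J iota rho2) ->
        rep_equiv rho1 rho2) /\
     (forall sigma : vec n -> tF F, is_rep r J sigma ->
        exists2 rho : vec n' -> tF F, is_rep r' J' rho &
          rep_equiv (pullback J iota rho) sigma)).
Proof.
move=> _ hJ hJ' hPE.
have [_ _ _ hf hb] := PE_Q F hPE.
have ne : J != fset0 by case: hJ.
have rJ := Mconvex_rank hJ; have rJ' := Mconvex_rank hJ'.
split; first by move=> rho; exact: hf.
split; first by move=> rho1 rho2 _ _; exact: equiv_pullback.
move=> hbij; split; first by move=> rho1 rho2; exact: equiv_back.
move=> sg hsg; exact: (hb hbij r r' sg ne rJ rJ' hsg).
Qed.
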